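(* Let $\mathcal{C}$ be a non-attacking configuration. Then there exists a constant $\mu$ such that $\mathrm{inloss}_n(\mathcal{C}) \le \mu$ for all $n \in \mathbb{N}$.
   Context: For $n \in \mathbb{N}$ let $I_n = \{\lfloor (2-n)/2 \rfloor, \ldots, \lfloor n/2 \rfloor\}$ and $\mathcal{B}_n = I_n \times I_n$. A configuration is a finite set $\mathcal{C} \subset \mathbb{Z}\times\mathbb{Z}$. For $Q=(x,y)$, $A(Q) = \{(x+i,y),(x,y+i),(x+i,y+i),(x+i,y-i) : i \in \mathbb{Z}\setminus\{0\}\}$ and $A(\mathcal{C}) = \bigcup_{Q\in\mathcal{C}} A(Q)$. $\mathcal{C}$ is non-attacking if $Q'\notin A(Q)$ for all distinct $Q,Q'\in\mathcal{C}$. The attacking number of $s \in \mathbb{Z}^2$ is $a_{\mathcal{C}}(s) = \#\{Q \in \mathcal{C} : s \in A(Q)\}$, and the internal loss is $\mathrm{inloss}_n(\mathcal{C}) = \sum_{s \in A(\mathcal{C})\cap\mathcal{B}_n} (a_{\mathcal{C}}(s) - 1)$. *)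

(* Defs.v *)
From HB Require Import structures.
From mathcomp Require Import all_boot all_order all_algebra.
From mathcomp Require Import finmap zify.
Set Implicit Arguments. Unset Strict Implicit. Unset Printing Implicit Defensive.
Import Order.TTheory GRing.Theory Num.Theory.
Local Open Scope fset_scope.

Definition point := (int * int)%type.

Definition I_lo (n : nat) : int := ((2%:Z - n%:Z) %/ 2)%Z.
Definition I_hi (n : nat) : int := (n%:Z %/ 2)%Z.
Definition Iseq (n : nat) : seq int :=
  [seq (I_lo n + k%:Z)%R | k <- iota 0 (absz (I_hi n - I_lo n + 1)%R)].

Definition box (n : nat) : seq point :=
  [seq (a, b) | a <- Iseq n, b <- Iseq n].

(* Q attacks s, i.e. s \in A(Q), where
   A(Q) = {(x+i,y),(x,y+i),(x+i,y+i),(x+i,y-i) : i <> 0}.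
   Boolean rendering: take i := (s.1 - x) (resp. s.2 - y). See attacksP. *)
Definition attacks (Q s : point) : bool :=
  let: (x, y) := Q in let: (a, b) := s in
  [|| (b == y) && (a - x != 0)%R,
      (a == x) && (b - y != 0)%R,
      (a - x == b - y)%R && (a - x != 0)%R
    | (a - x == y - b)%R && (a - x != 0)%R].

Lemma attacksP (Q s : point) :
  attacks Q s <->
  exists i : int, i <> 0%R /\
    (s = (Q.1 + i, Q.2)%R \/ s = (Q.1, Q.2 + i)%R \/
     s = (Q.1 + i, Q.2 + i)%R \/ s = (Q.1 + i, Q.2 - i)%R).
Proof.
case: Q s => x y [a b] /=; split.
- case/or4P => /andP [/eqP e /eqP ne].
  + by exists (a - x)%R; split=> //; left; congr pair; lia.
  + by exists (b - y)%R; split=> //; right; left; congr pair; lia.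
  + by exists (a - x)%R; split=> //; right; right; left; congr pair; lia.
  + by exists (a - x)%R; split=> //; right; right; right; congr pair; lia.
- move=> [i [ni [|[|[|]]]]] [-> ->]; apply/or4P.
  + by constructor 1; apply/andP; split; apply/eqP; lia.
  + by constructor 2; apply/andP; split; apply/eqP; lia.
  + by constructor 3; apply/andP; split; apply/eqP; lia.
  + by constructor 4; apply/andP; split; apply/eqP; lia.
Qed.

Definition nonattacking (C : {fset point}) : Prop :=
  forall Q Q', Q \in C -> Q' \in C -> Q != Q' -> ~~ attacks Q Q'.

Definition attacked (C : {fset point}) (s : point) : bool :=
  [exists Q : C, attacks (val Q) s].

Definition attnum (C : {fset point}) (s : point) : nat :=
  #|` [fset Q in C | attacks Q s] |.

Definition inloss (n : nat) (C : {fset point}) : nat :=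
  \sum_(s <- box n | attacked C s) (attnum C s - 1).

(* Main.v *)
Require Import Defs.
From mathcomp Require Import all_boot all_order all_algebra finmap zify.
Import Order.TTheory GRing.Theory Num.Theory.
Local Open Scope ring_scope.

Definition lin (k : nat) (p : point) : int :=
  match k with 0%N => p.2 | 1%N => p.1 | 2%N => p.1 - p.2 | _ => p.1 + p.2 end.

Lemma att_lin (Q s : point) : attacks Q s -> exists2 k, (k < 4)%N & lin k Q = lin k s.
Proof.
case: Q s => x y [a b]; rewrite /attacks.
case/or4P=> /andP[/eqP h _].
- by exists 0%N => //=.
- by exists 1%N => //=.
- by exists 2%N => //=; lia.
- by exists 3%N => //=; lia.
Qed.

Lemma natt_lin (Q Q' : point) : ~~ attacks Q Q' -> Q != Q' -> forall k, (k < 4)%N -> lin k Q != lin k Q'.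
Proof.
case: Q Q' => x y [a b]; rewrite /attacks xpair_eqE => H Hn.
have Hd : ~ (a = x /\ b = y).
  by case=> ea eb; move: Hn; rewrite ea eb !eqxx.
case=> [|[|[|[|//]]]] _ /=; apply/eqP => E; move/negP: H; apply; apply/or4P.
- constructor 1; apply/andP; split; apply/eqP; lia.
- constructor 2; apply/andP; split; apply/eqP; lia.
- constructor 3; apply/andP; split; apply/eqP; lia.
- constructor 4; apply/andP; split; apply/eqP; lia.
Qed.

Lemma geom (x y x' y' a b : int) (K : int) :
  attacks (x,y) (a,b) -> attacks (x',y') (a,b) -> ~~ attacks (x,y) (x',y') ->
  (x,y) != (x',y') ->
  -K <= x <= K -> -K <= y <= K -> -K <= x' <= K -> -K <= y' <= K ->
  -(3*K) <= a <= 3*K /\ -(3*K) <= b <= 3*K.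
Proof.
move=> /att_lin[k hk e1] /att_lin[k' hk' e2] /natt_lin H /H {}H.
case: (k =P k') => [ek|nk].
  by subst k'; have := H k hk; rewrite e1 e2 eqxx.
move: hk hk' nk e1 e2 => /=; case: k => [|[|[|[|//]]]] _;
case: k' => [|[|[|[|//]]]] _ //= _; lia.
Qed.

Lemma bnd (x : int) (K : nat) : (absz x <= K)%N -> -(K%:Z) <= x <= K%:Z.
Proof. move=> h; rewrite -ler_norml -abszE lez_nat //. Qed.

Lemma geom2 (Q Q' s : point) (Kn : nat) :
  attacks Q s -> attacks Q' s -> ~~ attacks Q Q' -> Q != Q' ->
  (absz Q.1 + absz Q.2 <= Kn)%N -> (absz Q'.1 + absz Q'.2 <= Kn)%N ->
  -((3*Kn)%N%:Z) <= s.1 <= (3*Kn)%N%:Z /\ -((3*Kn)%N%:Z) <= s.2 <= (3*Kn)%N%:Z.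
Proof.
case: Q => x y; case: Q' => x' y'; case: s => a b /= h1 h2 h3 h4 h5 h6.
have [||||] := @geom x y x' y' a b Kn%:Z h1 h2 h3 h4.
- by apply: bnd; apply: leq_trans (leq_addr _ _) h5.
- by apply: bnd; apply: leq_trans (leq_addl _ _) h5.
- by apply: bnd; apply: leq_trans (leq_addr _ _) h6.
- by apply: bnd; apply: leq_trans (leq_addl _ _) h6.
by rewrite PoszM.
Qed.

Lemma box_uniq n : uniq (box n).
Proof.
rewrite /box; apply: allpairs_uniq.
- rewrite /Iseq map_inj_uniq ?iota_uniq // => i j /=; lia.
- rewrite /Iseq map_inj_uniq ?iota_uniq // => i j /=; lia.
- by move=> [? ?] [? ?] _ _.
Qed.

Local Close Scope ring_scope.
Theorem mainTheorem4 (C : {fset point}) :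
  nonattacking C -> exists mu : nat, forall n : nat, inloss n C <= mu.
Proof.
Local Open Scope ring_scope.
move=> HC.
pose Kn := (\max_(Q <- C) (absz Q.1 + absz Q.2))%N.
have hK : forall Q, Q \in C -> (absz Q.1 + absz Q.2 <= Kn)%N.
  by move=> Q hQ; rewrite /Kn; apply: leq_bigmax_seq.
pose M := (3 * Kn)%N.
pose R := [seq (k%:Z - M%:Z) | k <- iota 0 (2*M).+1].
have hR : forall a : int, -(M%:Z) <= a <= M%:Z -> a \in R.
  move=> a ha; apply/mapP; exists (absz (a + M%:Z)); last by lia.
  rewrite mem_iota; lia.
pose Sq := [seq (a,b) | a <- R, b <- R].
pose f := fun s => (attnum C s - 1)%N.
have key : forall s, (0 < f s)%N -> s \in Sq.
  move=> s; rewrite /f /attnum subn_gt0.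
  set A := [fset Q in C | attacks Q s]%fset => hA.
  have /fset0Pn [Q hQ] : A != fset0%fset by rewrite -cardfs_gt0; lia.
  have : (0 < #|` (A `\ Q)%fset|)%N by move: hA; rewrite (cardfsD1 Q) hQ; lia.
  rewrite cardfs_gt0 => /fset0Pn [Q' /fsetD1P [nQ hQ']].
  move: hQ hQ'; rewrite !inE => /andP[QC aQ] /andP[Q'C aQ'].
  have nQ' : Q != Q' by rewrite eq_sym.
  have nat' := HC Q Q' QC Q'C nQ'.
  have [ha hb] := @geom2 Q Q' s Kn aQ aQ' nat' nQ' (hK Q QC) (hK Q' Q'C).
  clear -ha hb hR; case: s ha hb => a b ha hb.
  have h := @allpairs_f _ _ _ (fun a b : int => (a, b)) R R a b (hR _ ha) (hR _ hb). exact: h.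
exists (\sum_(s <- undup Sq) f s)%N => n.
apply: (@leq_trans (\sum_(s <- box n) f s)%N).
  rewrite /inloss big_mkcond /=; apply: leq_sum => s _; case: ifP => //.
have -> : (\sum_(s <- box n) f s = \sum_(s <- box n | s \in Sq) f s)%N.
  rewrite [in RHS]big_mkcond /=; apply: eq_bigr => s _; case: ifP => // h.
  apply/eqP; rewrite -leqn0 leqNgt; by apply/negP => /key; rewrite h.
have -> : (\sum_(s <- box n | s \in Sq) f s = \sum_(s <- [seq s <- box n | s \in Sq]) f s)%N by rewrite big_filter.
apply: (@uniq_sub_le_big _ _ leq) => //.
- by move=> x y; apply: leq_addr.
- by rewrite filter_uniq ?box_uniq.
- exact: undup_uniq.
- by move=> s; rewrite mem_filter mem_undup => /andP[].
Qed.
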